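(* For all subsets $X_i, X_j \subseteq A$ the following hold: 1. $X_i \leadsto X_j$ if and only if for every $S' \subseteq S$: $\Psi_{X_i \cup X_j}(S') \subseteq \Psi_{X_i}(\Omega_{X_i \cup X_j}(S'))$; 2. $X_i \leadsto X_j$ if and only if for every $S' \subseteq S$: $\Psi_{X_i \cup X_j}(S') = \Psi_{X_i}(\Psi_{X_i \cup X_j}(S'))$.
   Context: Let $A$ be a finite set of agents. For each $a \in A$ let $S_a$ be a nonempty finite set, and let $S = \prod_{a \in A} S_a$ be the set of states. For each $a \in A$ let $\to_a \subseteq S \times S$ be a relation that is either empty or left-total (every state has at least one $\to_a$-successor), such that whenever $s \to_a s'$, either $s = s'$ or $s$ and $s'$ differ only in the $a$-component. For $X \subseteq A$ let $\to_X = \bigcup_{a \in X} \to_a$ (so $\to_\emptyset$ is empty) and let $\to_X^*$ be its reflexive-transitive closure. For $T \subseteq S$ write $(T \to_X) = \{ t' : \exists t \in T,\ t \to_X t'\}$. Orbit operator: $\Omega_X(S') = \{ s' : \exists s \in S',\ s \to_X^* s'\}$. Equilibria operator: $\Psi_X(S') = \{ s \in \Omega_X(S') : \forall s' \in S,\ s \to_X^* s' \implies s' \to_X^* s \}$. The modularity relation ($M$-relation) on subsets of $A$ is defined by: $X_i \leadsto X_j$ iff for every $S' \subseteq S$, letting $T = \Psi_{X_i}(\Psi_{X_i \cup X_j}(S'))$, one has $(T \to_{X_j}) \subseteq T$. *)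

(* Defs.v *)
From mathcomp Require Import all_boot.
Set Implicit Arguments. Unset Strict Implicit. Unset Printing Implicit Defensive.

Section Modularity.
Variables (A : finType) (Sa : A -> finType).

Definition state := {dffun forall a : A, Sa a}.

Variable step : A -> rel state.

Definition stepX (X : {set A}) : rel state :=
  fun s t => [exists a in X, step a s t].

Definition reachX (X : {set A}) : rel state := connect (stepX X).

Definition succ_set (T : {set state}) (X : {set A}) : {set state} :=
  [set t | [exists s in T, stepX X s t]].

Definition Omega (X : {set A}) (S' : {set state}) : {set state} :=
  [set t | [exists s in S', reachX X s t]].

Definition Psi (X : {set A}) (S' : {set state}) : {set state} :=
  [set s in Omega X S' | [forall t, reachX X s t ==> reachX X t s]].

Definition Mrel (Xi Xj : {set A}) : Prop :=
  forall S' : {set state},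
    let T := Psi Xi (Psi (Xi :|: Xj) S') in
    succ_set T Xj \subset T.

End Modularity.

(* Main.v *)
Require Import Defs.
From mathcomp Require Import all_boot.
Set Implicit Arguments. Unset Strict Implicit. Unset Printing Implicit Defensive.

Section H.
Variables (A : finType) (Sa : A -> finType) (step : A -> rel (state Sa)).
Local Notation R := (reachX step).
Definition Eqb X (s : state Sa) := [forall t, R X s t ==> R X t s].

Lemma EqbP X s : reflect (forall t, R X s t -> R X t s) (Eqb X s).
Proof. apply: (iffP forallP) => H t; [exact/implyP/H | exact/implyP/H]. Qed.

Lemma memPsi X S s : (s \in Psi step X S) = [exists u in S, R X u s] && Eqb X s.
Proof. by rewrite /Psi /Omega !inE. Qed.

Lemma reach_mono (X Y : {set A}) : X \subset Y -> forall s t, R X s t -> R Y s t.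
Proof.
move=> sXY s t; apply: connect_sub => u v /existsP[a /andP[aX st]].
apply: connect1; apply/existsP; exists a; rewrite (subsetP sXY) //.
Qed.

Lemma Eq_closed X s t : Eqb X s -> R X s t -> Eqb X t.
Proof.
move=> /EqbP Hs st; apply/EqbP => u tu.
have su : R X s u := connect_trans st tu.
exact: connect_trans (Hs _ su) st.
Qed.

Lemma Psi_closed X S s t : s \in Psi step X S -> R X s t -> t \in Psi step X S.
Proof.
rewrite !memPsi => /andP[/existsP[u /andP[uS us]] Es] st.
apply/andP; split; last exact: Eq_closed Es st.
apply/existsP; exists u; rewrite uS; exact: connect_trans us st.
Qed.

Lemma Psi_sub (X Y : {set A}) S s : X \subset Y -> s \in Psi step X (Psi step Y S) -> s \in Psi step Y S.
Proof.
move=> sXY; rewrite memPsi => /andP[/existsP[w /andP[wP ws]] _].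
exact: Psi_closed wP (reach_mono sXY ws).
Qed.

Lemma Psi_intro X (P : {set state Sa}) s : s \in P -> Eqb X s -> s \in Psi step X P.
Proof. move=> sP Es; rewrite memPsi Es andbT; apply/existsP; exists s; rewrite sP; exact: connect0. Qed.

Lemma exists_Eq X s : exists t, R X s t && Eqb X t.
Proof.
pose F t := #|[set u | R X t u]|.
case: (@arg_minnP _ s (R X s) F (connect0 _ _)) => t st Hmin.
exists t; rewrite st /=; apply/EqbP => u tu.
have sub : [set v | R X u v] \subset [set v | R X t v].
  apply/subsetP => v; rewrite !inE; exact: connect_trans tu.
have := Hmin u (connect_trans st tu).
rewrite /F => le.
have eqS : [set v | R X u v] = [set v | R X t v].
  by apply/eqP; rewrite eqEcard sub le.
have : t \in [set v | R X u v] by rewrite eqS inE; exact: connect0.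
by rewrite inE.
Qed.

Lemma Om_in X S s : s \in Omega step X S = [exists u in S, R X u s].
Proof. by rewrite /Omega inE. Qed.

Section Main.
Variables (Xi Xj : {set A}).
Local Notation U := (Xi :|: Xj).
Definition Cond := forall s, Eqb U s -> Eqb Xi s.

Lemma sXiU : Xi \subset U. Proof. exact: subsetUl. Qed.
Lemma sXjU : Xj \subset U. Proof. exact: subsetUr. Qed.

Lemma single_Psi s : Eqb U s -> s \in Psi step U [set s].
Proof. move=> Es; apply: Psi_intro => //; by rewrite inE. Qed.

Lemma part1 : Cond <-> (forall S, Psi step U S \subset Psi step Xi (Omega step U S)).
Proof.
split.
- move=> C S; apply/subsetP => s sP; apply: Psi_intro; last first.
    by apply: C; move: sP; rewrite memPsi => /andP[].
  by move: sP; rewrite memPsi Om_in => /andP[].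
- move=> H s Es; have := subsetP (H [set s]) s (single_Psi Es).
  by rewrite memPsi => /andP[].
Qed.

Lemma part2 : Cond <-> (forall S, Psi step U S = Psi step Xi (Psi step U S)).
Proof.
split.
- move=> C S; apply/eqP; rewrite eqEsubset; apply/andP; split; apply/subsetP => s sP.
    apply: Psi_intro => //; apply: C; by move: sP; rewrite memPsi => /andP[].
  exact: Psi_sub sXiU sP.
- move=> H s Es; have := single_Psi Es; rewrite (H [set s]).
  by rewrite memPsi => /andP[].
Qed.

Lemma part3 : Cond <-> Mrel step Xi Xj.
Proof.
split.
- move=> C S /=; apply/subsetP => t; rewrite /succ_set inE => /existsP[s /andP[sT st]].
  have sP := Psi_sub sXiU sT.
  have tP : t \in Psi step U S.
    apply: Psi_closed sP _; apply: connect1; move: st => /existsP[a /andP[aX st]].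
    apply/existsP; exists a; by rewrite (subsetP sXjU).
  apply: Psi_intro => //; apply: C; by move: tP; rewrite memPsi => /andP[].
- move=> M s Es.
  set T := Psi step Xi (Psi step U [set s]).
  have Ts : forall x y, x \in T -> stepX step U x y -> y \in T.
    move=> x y xT /existsP[a /andP[aU xy]].
    move: aU; rewrite inE => /orP[aXi|aXj].
      apply: Psi_closed xT _; apply: connect1; apply/existsP; exists a; by rewrite aXi.
    apply: (subsetP (M [set s])); rewrite /succ_set inE; apply/existsP; exists x.
    rewrite xT /=; apply/existsP; exists a; by rewrite aXj.
  have Tc : forall x y, x \in T -> R U x y -> y \in T.
    move=> x y xT /connectP[p pth ->]; elim: p x xT pth => [|z p IH] x xT //=.
    move=> /andP[xz pth]; exact: IH (Ts _ _ xT xz) pth.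
  case: (exists_Eq Xi s) => t /andP[st Et].
  have stU := reach_mono sXiU st.
  have tT : t \in T.
    apply: Psi_intro => //; apply: Psi_closed (single_Psi Es) stU.
  have tsU : R U t s by move/EqbP: Es; apply.
  have := Tc _ _ tT tsU; by rewrite memPsi => /andP[].
Qed.
End Main.
End H.

Theorem proposition2 (A : finType) (Sa : A -> finType)
  (Sa_nonempty : forall a : A, 0 < #|Sa a|)
  (step : A -> rel (state Sa))
  (step_empty_or_total : forall a : A,
     (forall s t, ~~ step a s t) \/ (forall s, exists t, step a s t))
  (step_local : forall (a : A) (s t : state Sa), step a s t ->
     s = t \/ (forall b : A, b != a -> s b = t b))
  (Xi Xj : {set A}) :
  (Mrel step Xi Xj <->
     (forall S' : {set state Sa},
        Psi step (Xi :|: Xj) S' \subset Psi step Xi (Omega step (Xi :|: Xj) S')))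
  /\
  (Mrel step Xi Xj <->
     (forall S' : {set state Sa},
        Psi step (Xi :|: Xj) S' = Psi step Xi (Psi step (Xi :|: Xj) S'))).
Proof.
have h3 := part3 step Xi Xj.
split.
- exact: iff_trans (iff_sym h3) (part1 step Xi Xj).
- exact: iff_trans (iff_sym h3) (part2 step Xi Xj).
Qed.
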